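(* Let $H$ be a $(B,C)$-graph and let $\mu(H)$ denote the number of minor faces of $H$. Then $\mu(H) \geq |V(H)| - |V(C)| + 2$ (equivalently, $\mu(H)\ge |B|+2$).
   Context: Let $C$ be a cycle and $B$ a finite set disjoint from $V(C)$. A plane graph $H$ (i.e. a planar graph together with a fixed embedding in the plane) is called a $(B,C)$-graph if $V(H)=B\cup V(C)$, $C$ is a subgraph of $H$ that is an induced subgraph of $H$, the set $B$ is independent in $H$, and every vertex of $B$ has degree exactly $3$ in $H$. The vertices of $B$ are called outer vertices. A face of $H$ is called minor if it is incident with at most one outer vertex, and major otherwise. *)

(* Defs.v *)
(* Plane graphs are represented combinatorially by
   rotation systems (combinatorial maps) of genus 0. *)
From mathcomp Require Import all_boot.
Set Implicit Arguments. Unset Strict Implicit. Unset Printing Implicit Defensive.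

Section PlaneGraphs.
Variables (D V : finType).

Definition orbit_set (g : D -> D) (x : D) : {set D} := [set y | fconnect g x y].
Definition orbits (g : D -> D) : {set {set D}} := [set orbit_set g x | x : D].

(* e : edge involution (the other half of the edge),
   n : rotation around a vertex (node permutation),
   faces are the orbits of the face permutation n \o e. *)
Definition face_perm (e n : D -> D) : D -> D := fun x => n (e x).

Definition glink (e n : D -> D) : rel D := [rel x y | (y == e x) || (y == n x)].

(* a connected combinatorial map of genus 0 (Euler's formula V - E + F = 2),
   i.e. a connected plane embedding *)
Definition plane_map (e n : D -> D) : Prop :=
  [/\ involutive e, (forall x, e x != x), injective n,
      (forall x y, connect (glink e n) x y) &
      #|orbits n| + #|orbits (face_perm e n)| = #|orbits e| + 2].

(* vx labels each dart by its vertex: vertices = node orbits *)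
Definition vertex_labelling (n : D -> D) (vx : D -> V) : Prop :=
  (forall x y, vx x = vx y <-> fconnect n x y) /\ (forall u, exists x, vx x = u).

(* the underlying graph is simple: no loops, no multiple edges *)
Definition simple_map (e : D -> D) (vx : D -> V) : Prop :=
  (forall x, vx (e x) != vx x) /\
  (forall x y, vx x = vx y -> vx (e x) = vx (e y) -> x = y).

Definition adj (e : D -> D) (vx : D -> V) (u w : V) : Prop :=
  exists x, vx x = u /\ vx (e x) = w.

(* number of darts at u = degree of u (graph is simple) *)
Definition degree (vx : D -> V) (u : V) : nat := #|[set x | vx x == u]|.

(* (B,C)-graph, with the cycle C given as the cyclic sequence c *)
Definition BC_graph (e n : D -> D) (vx : D -> V) (B : {set V}) (c : seq V) : Prop :=
  [/\ plane_map e n, vertex_labelling n vx, simple_map e vx,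
      [/\ 3 <= size c, uniq c & forall u, u \in c -> adj e vx u (next c u)] &
      [/\ (* V(H) = B \cup V(C), disjoint *)
          (forall u, (u \in B) = (u \notin c)),
          (* C is induced *)
          (forall u w, u \in c -> w \in c -> adj e vx u w ->
                       w = next c u \/ u = next c w),
          (forall u w, u \in B -> w \in B -> ~ adj e vx u w) &
          (forall u, u \in B -> degree vx u = 3)]].

Definition outer_on_face (vx : D -> V) (B : {set V}) (F : {set D}) : {set V} :=
  [set u in B | [exists x in F, vx x == u]].

Definition minor_face (vx : D -> V) (B : {set V}) (F : {set D}) : bool :=
  #|outer_on_face vx B F| <= 1.

Definition mu (e n : D -> D) (vx : D -> V) (B : {set V}) : nat :=
  #|[set F in orbits (face_perm e n) | minor_face vx B F]|.

End PlaneGraphs.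

(* Main.v *)
Require Import Defs.
From mathcomp Require Import all_boot.
From mathcomp Require Import zify.
Set Implicit Arguments. Unset Strict Implicit. Unset Printing Implicit Defensive.

Lemma fcon_iter (T : finType) (f : T -> T) x y :
  fconnect f x y -> exists i, y = iter i f x.
Proof. by rewrite fconnect_orbit => /trajectP[i _ ->]; exists i. Qed.

Lemma orbit_set_self (T : finType) (f : T -> T) x : x \in orbit_set f x.
Proof. by rewrite inE connect0. Qed.

Lemma orbit_eq (T : finType) (g : T -> T) (A : {set T}) x :
  injective g -> A \in orbits g -> x \in A -> A = orbit_set g x.
Proof.
move=> ig /imsetP[y _ ->]; rewrite inE => yx.
apply/setP => z; rewrite !inE; apply/idP/idP => h.
  by apply: connect_trans h; rewrite fconnect_sym.
exact: connect_trans yx h.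
Qed.

Lemma orbit_mem (T : finType) (g : T -> T) (A : {set T}) x :
  injective g -> A \in orbits g -> (orbit_set g x == A) = (x \in A).
Proof.
move=> ig hA; apply/eqP/idP => [<-|xA]; first exact: orbit_set_self.
by rewrite (orbit_eq ig hA xA).
Qed.

Lemma orbits_sum (T : finType) (g : T -> T) (S : {set T}) :
  injective g -> \sum_(A in orbits g) #|A :&: S| = #|S|.
Proof.
move=> ig; rewrite -sum1_card (partition_big (orbit_set g) (mem (orbits g))) /=;
  last by move=> x _; apply: imset_f.
apply: eq_bigr => A hA; rewrite -sum1_card; apply: eq_bigl => x.
by rewrite !inE orbit_mem // andbC.
Qed.

Lemma nn_neq (V : eqType) (c : seq V) u :
  uniq c -> 3 <= size c -> u \in c -> next c (next c u) != u.
Proof.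
move=> uc sc /rot_to[i s hs].
have ur : uniq (rot i c) by rewrite rot_uniq.
rewrite -!(next_rot i uc) hs.
have : 2 <= size s by rewrite -(size_rot i c) hs /= in sc.
case: s hs ur => [|a [|b s']] //= hs.
rewrite hs /= !inE !negb_or => /and4P[/and3P[ua ub _] _ _ _] _.
have ua' : (a == u) = false by rewrite eq_sym; apply/negbTE.
by rewrite eqxx ua' eqxx eq_sym.
Qed.

Lemma cardsU0 (T : finType) (A B : {set T}) :
  (forall x, x \in A -> x \in B -> False) -> #|A :|: B| = #|A| + #|B|.
Proof.
move=> h; rewrite cardsU; suff -> : A :&: B = set0 by rewrite cards0 subn0.
by apply/setP => x; rewrite !inE; apply/negbTE/negP => /andP[/h H /H].
Qed.

Lemma sum_bool_card (T : finType) (A : {set T}) (P : pred T) :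
  \sum_(i in A) (P i : nat) = #|[set i in A | P i]|.
Proof.
rewrite -sum1_card big_mkcond [RHS]big_mkcond; apply: eq_bigr => i _.
by rewrite inE; case: (i \in A); case: (P i).
Qed.

Lemma iter_prev_next (V : eqType) (c : seq V) j v :
  uniq c -> iter j (prev c) (iter j (next c) v) = v.
Proof.
move=> uc; elim: j => // j IH.
by rewrite [iter j.+1 (prev c) _]iterSr iterS prev_next.
Qed.

Lemma orbits_e_le (D : finType) (e : D -> D) :
  involutive e -> #|D| <= 2 * #|orbits e|.
Proof.
move=> ie; have ei : injective e := inv_inj ie.
rewrite -cardsT -(orbits_sum _ ei) mulnC -sum_nat_const.
apply: leq_sum => A /imsetP[x _ ->]; rewrite setIT.
apply: leq_trans (_ : #|[set x; e x]| <= 2); last by rewrite cards2; case: (_ != _).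
apply: subset_leq_card; apply/subsetP => y; rewrite inE => /fcon_iter[i ->].
elim: i => [|i]; first by rewrite !inE eqxx.
rewrite iterS !inE => /orP[] /eqP ->; by rewrite ?ie eqxx ?orbT.
Qed.

Lemma orbits_n_le (D V : finType) (n : D -> D) (vx : D -> V) :
  vertex_labelling n vx -> #|orbits n| <= #|V|.
Proof.
move=> [lab _].
pose h u := if [pick x | vx x == u] is Some x then orbit_set n x else set0.
have hx x : orbit_set n x = h (vx x).
  rewrite /h; case: pickP => [y /eqP hy|/(_ x)]; last by rewrite eqxx.
  apply/setP => z; rewrite !inE; apply/idP/idP => /(lab _ _).2 hz;
  by apply/(lab _ _).1; rewrite -hz.
rewrite -cardsT; apply: (leq_trans _ (leq_imset_card h [set: V])).
apply: subset_leq_card; apply/subsetP => A /imsetP[x _ ->].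
by rewrite hx; apply: imset_f.
Qed.

Theorem mainTheorem2 (D V : finType) (e n : D -> D) (vx : D -> V)
    (B : {set V}) (c : seq V) :
  BC_graph e n vx B c ->
  #|V| - size c + 2 <= mu e n vx B.
Proof.
case=> [[ie efp ni conn euler] vl [sloop smult] [sc uc cadj] [Bc cind Bind Bdeg]].
have hOn := orbits_n_le vl.
have hOe := orbits_e_le ie.
move: vl => [lab lsurj].
have ei : injective e := inv_inj ie.
set fp := face_perm e n.
have fpi : injective fp by move=> x y /ni /ei.
set Fs := orbits fp in euler *.
have labN x : vx (n x) = vx x by symmetry; apply/(lab _ _).2/fconnect1.
have hV : #|B| + size c = #|V|.
  have cc : #|c| = size c by apply/card_uniqP.
  rewrite -cc -(cardC (mem c)) addnC; congr (_ + _).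
  by apply: eq_card => u; rewrite Bc.
set Bd := [set x | vx x \in B].
have hBd : #|Bd| = 3 * #|B|.
  rewrite -sum1_card (partition_big vx (mem B)) /=; last by move=> x; rewrite inE.
  rewrite mulnC -sum_nat_const; apply: eq_bigr => u uB.
  rewrite -(Bdeg u uB) /degree -sum1_card; apply: eq_bigl => x.
  by rewrite !inE; case: (vx x =P u) => [->|]; rewrite ?uB ?andbF.
have hD : 6 * #|B| + 2 * size c <= #|D|.
  set Fw := [set x | (vx x \in c) && (vx (e x) == next c (vx x))].
  have hFw : size c <= #|Fw|.
    have cc : #|c| = size c by apply/card_uniqP.
    apply: (@leq_trans #|vx @: Fw|); last exact: leq_imset_card.
    rewrite -cc -cardsE; apply: subset_leq_card.
    apply/subsetP => u; rewrite inE => uc'; have [x [xu xn]] := cadj u uc'.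
    by apply/imsetP; exists x; rewrite // inE xu xn eqxx uc'.
  have inc x : x \in Fw -> (vx x \in c) && (vx (e x) \in c).
    by rewrite inE => /andP[h /eqP ->]; rewrite mem_next h.
  have inc' x : x \in e @: Fw -> (vx x \in c) && (vx (e x) \in c).
    by case/imsetP => y /inc /andP[a b] ->; rewrite ie b a.
  have notB u : u \in c -> u \in B -> False by rewrite Bc => ->.
  have d12 : forall x, x \in Bd -> x \in e @: Bd -> False.
    move=> x; rewrite inE => xB /imsetP[y]; rewrite inE => yB xe.
    by apply: (Bind _ _ xB yB); exists x; split=> //; rewrite xe ie.
  have d34 : forall x, x \in Fw -> x \in e @: Fw -> False.
    move=> x xF /imsetP[y yF xe]; move: (yF) (xF); rewrite !inE xe ie.
    move=> /andP[yc /eqP h1] /andP[_ /eqP h2].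
    by move: (nn_neq uc sc yc); rewrite -h1 -h2 eqxx.
  have d1234 : forall x, x \in Bd :|: e @: Bd -> x \in Fw :|: e @: Fw -> False.
    move=> x h1 /setUP[/inc|/inc'] /andP[a b]; case/setUP: h1 => [|/imsetP[y]].
    - by rewrite inE; apply: notB.
    - by rewrite inE => yB xe; apply: (notB _ b); rewrite xe ie.
    - by rewrite inE; apply: notB.
    - by rewrite inE => yB xe; apply: (notB _ b); rewrite xe ie.
  have := subset_leq_card (subsetT ((Bd :|: e @: Bd) :|: (Fw :|: e @: Fw))).
  rewrite cardsT !cardsU0 // !card_imset // hBd; lia.
have hZ : #|[set F in Fs | F :&: Bd == set0]| <= 2.
  have /hasP[u0 u0c _] : has predT c by rewrite has_predT; lia.
  have [xf [xf0 xf1]] := cadj u0 u0c.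
  have pc : prev c u0 \in c by rewrite mem_prev.
  have [yb [yb0 yb1]] := cadj _ pc.
  rewrite (next_prev uc) in yb1.
  have cls x : vx x \in c -> vx (e x) \in c ->
      vx (e x) = next c (vx x) \/ vx (e x) = prev c (vx x).
    move=> a b; have : adj e vx (vx x) (vx (e x)) by exists x.
    case/(cind _ _ a b) => [->|h]; [by left|right]; by rewrite h prev_next.
  have nofix y : vx y \in c -> n y != y.
    move=> yc; apply/eqP => ny.
    have all1 z : vx z = vx y -> z = y.
      move=> h; have /fcon_iter[i ->] : fconnect n y z by apply/(lab _ _).1.
      exact: iter_fix.
    have [z1 [z10 z11]] := cadj _ yc.
    have pyc : prev c (vx y) \in c by rewrite mem_prev.
    have [z2 [z20 z21]] := cadj _ pyc.
    rewrite (next_prev uc) in z21.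
    have e1 := all1 _ z10; have e2 := all1 _ z21.
    have : next c (vx y) = prev c (vx y).
      by rewrite -z11 -z20 -[z2]ie e1 e2.
    move=> h; have := nn_neq uc sc pyc; by rewrite (next_prev uc) h eqxx.
  apply: (@leq_trans #|[set orbit_set fp xf; orbit_set fp (e yb)]|);
    last by rewrite cards2; case: (_ != _).
  apply: subset_leq_card; apply/subsetP => F; rewrite inE => /andP[FFs /eqP F0].
  have inF x : x \in F -> vx x \in c.
    move=> xF; rewrite -[_ \in c]negbK -Bc; apply/negP => xB.
    have : x \in F :&: Bd by rewrite !inE xF xB.
    by rewrite F0 inE.
  have stepF x : x \in F -> fp x \in F.
    by move=> xF; rewrite (orbit_eq fpi FFs xF) inE; apply: fconnect1.
  have inF' x : x \in F -> vx (e x) \in c.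
    by move=> xF; rewrite -(labN (e x)); exact: inF (stepF _ xF).
  have fwd x : x \in F -> vx (e x) = next c (vx x) ->
      vx (fp x) = next c (vx x) /\ vx (e (fp x)) = next c (vx (fp x)).
    move=> xF h; have h1 : vx (fp x) = vx (e x) by apply: labN.
    split; first by rewrite h1.
    case: (cls (fp x) (inF _ (stepF _ xF)) (inF' _ (stepF _ xF))) => // h2.
    have : fp x = e x.
      apply: smult; first exact: h1.
      by rewrite h2 h1 h (prev_next uc) ie.
    by move/eqP; rewrite (negbTE (nofix _ (inF' _ xF))).
  have bwd x : x \in F -> vx (e x) = prev c (vx x) ->
      vx (fp x) = prev c (vx x) /\ vx (e (fp x)) = prev c (vx (fp x)).
    move=> xF h; have h1 : vx (fp x) = vx (e x) by apply: labN.
    split; first by rewrite h1.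
    case: (cls (fp x) (inF _ (stepF _ xF)) (inF' _ (stepF _ xF))) => // h2.
    have : fp x = e x.
      apply: smult; first exact: h1.
      by rewrite h2 h1 h (next_prev uc) ie.
    by move/eqP; rewrite (negbTE (nofix _ (inF' _ xF))).
  have itf i : forall x, x \in F -> vx (e x) = next c (vx x) ->
      exists2 y, y \in F & vx y = iter i (next c) (vx x) /\ vx (e y) = next c (vx y).
    elim: i => [|i IH] x xF h; first by exists x.
    have [h1 h2] := fwd x xF h.
    have [y yF [y1 y2]] := IH _ (stepF _ xF) h2.
    by exists y => //; rewrite iterSr -h1.
  have itb i : forall x, x \in F -> vx (e x) = prev c (vx x) ->
      exists2 y, y \in F & vx y = iter i (prev c) (vx x) /\ vx (e y) = prev c (vx y).
    elim: i => [|i IH] x xF h; first by exists x.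
    have [h1 h2] := bwd x xF h.
    have [y yF [y1 y2]] := IH _ (stepF _ xF) h2.
    by exists y => //; rewrite iterSr -h1.
  case/imsetP: (FFs) => z0 _ Fz.
  have z0F : z0 \in F by rewrite Fz orbit_set_self.
  have z0c := inF _ z0F.
  case: (cls z0 z0c (inF' _ z0F)) => h.
  - have : fconnect (next c) (vx z0) u0 by rewrite (fconnect_cycle (cycle_next uc) z0c).
    case/fcon_iter => i hi.
    have [y yF [y1 y2]] := itf i _ z0F h.
    rewrite -hi in y1.
    have -> : F = orbit_set fp xf.
      apply: orbit_eq fpi FFs _; have -> // : xf = y.
      by apply: smult; [rewrite xf0 y1 | rewrite xf1 y2 y1].
    by rewrite !inE eqxx.
  - have : fconnect (next c) u0 (vx z0) by rewrite (fconnect_cycle (cycle_next uc) u0c).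
    case/fcon_iter => j hj.
    have [y yF [y1 y2]] := itb j _ z0F h.
    rewrite hj iter_prev_next // in y1.
    have -> : F = orbit_set fp (e yb).
      apply: orbit_eq fpi FFs _; have -> // : e yb = y.
      by apply: smult; [rewrite yb1 y1 | rewrite ie y2 y1].
    by rewrite !inE eqxx orbT.
have outer_le F : #|outer_on_face vx B F| <= #|F :&: Bd|.
  apply: leq_trans (subset_leq_card _) (leq_imset_card vx _).
  apply/subsetP => u; rewrite inE => /andP[uB /existsP[x /andP[xF /eqP xu]]].
  by apply/imsetP; exists x; rewrite // !inE xF xu uB.
have hpt : \sum_(F in Fs) 2 <= \sum_(F in Fs)
     (#|F :&: Bd| + ((F :&: Bd == set0) : nat) + (minor_face vx B F : nat)).
  apply: leq_sum => F _; have := outer_le F; rewrite /minor_face.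
  case: (F :&: Bd =P set0) => [->|/eqP]; first by rewrite cards0 leqn0 => /eqP ->.
  rewrite -card_gt0 /=; case: leqP => //=; lia.
have hsum : \sum_(F in Fs) #|F :&: Bd| = #|Bd| := orbits_sum Bd fpi.
rewrite !big_split /= !sum_bool_card hsum sum_nat_const in hpt.
have hm : #|[set i in Fs | minor_face vx B i]| = mu e n vx B by [].
rewrite hm in hpt. move: hpt hZ; set z := #|[set _ in Fs | _]|; set m := mu _ _ _ _. move: euler hOn hOe hD hV hBd. set FS := #|Fs|. set ON := #|orbits n|. set OE := #|orbits e|. set VV := #|V|. set DD := #|D|. set BB := #|B|. set BD := #|Bd|. clearbody FS ON OE VV DD BB BD z m. lia.
Qed.
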